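(* Let $n\ge 2$, $u\in\mathbb{R}^n$ and $s,v\in\mathcal{Q}_0(u)$. Then $(sv^t)^{[2]}$ is a $P_0$-matrix.
   Context: For $u\in\mathbb{R}^n$, $\mathcal{Q}(u)$ is the set of vectors with the same entrywise sign pattern as $u$, and $\mathcal{Q}_0(u)$ its closure. A square real matrix is a $P_0$-matrix if all its principal minors are nonnegative. For $M\in\mathbb{R}^{n\times n}$, $M^{[2]}$ is the second additive compound: the matrix of $x\wedge y\mapsto Mx\wedge y+x\wedge My$ on $\Lambda^2\mathbb{R}^n$ in the lexicographically ordered basis $e_i\wedge e_j$, $i<j$. *)

(* Defs.v *)
From HB Require Import structures.
From mathcomp Require Import all_boot all_order all_algebra.
From mathcomp Require Import all_classical all_reals all_analysis.
Set Implicit Arguments. Unset Strict Implicit. Unset Printing Implicit Defensive.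
Import Order.TTheory GRing.Theory Num.Theory.
Import numFieldNormedType.Exports.
Local Open Scope classical_set_scope.
Local Open Scope ring_scope.

Definition Qsign (R : realType) (n : nat) (u : 'cV[R]_n) : set 'cV[R]_n :=
  [set x | forall i : 'I_n, Num.sg (x i 0) = Num.sg (u i 0)].

Definition Qsign0 (R : realType) (n : nat) (u : 'cV[R]_n) : set 'cV[R]_n :=
  closure (Qsign u).

(* Index set of the basis e_i /\ e_j, i < j, of Lambda^2 R^n.  Its
   enumeration (inherited from the product 'I_n * 'I_n) is lexicographic. *)
Definition pairs (n : nat) := {p : 'I_n * 'I_n | (p.1 < p.2)%N}.

Definition wedge_coef (R : ringType) (n : nat) (x y : 'cV[R]_n) (p : pairs n) : R :=
  x (val p).1 0 * y (val p).2 0 - x (val p).2 0 * y (val p).1 0.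

Definition ebasis (R : ringType) (n : nat) (k : 'I_n) : 'cV[R]_n :=
  \col_(i < n) (if i == k then 1 else 0).

(* Second additive compound M^[2]: matrix of x/\y |-> Mx/\y + x/\My in the
   lexicographically ordered basis e_i /\ e_j, i < j. Column (k,l) is the
   image of e_k /\ e_l. *)
Definition compound2 (R : ringType) (n : nat) (M : 'M[R]_n) : 'M[R]_#|{: pairs n}| :=
  \matrix_(a, b)
    let p := enum_val a in let q := enum_val b in
    wedge_coef (M *m ebasis R (val q).1) (ebasis R (val q).2) p
    + wedge_coef (ebasis R (val q).1) (M *m ebasis R (val q).2) p.

Definition principal_submx (R : ringType) (m : nat) (A : 'M[R]_m) (S : {set 'I_m})
  : 'M[R]_#|S| :=
  mxsub (fun i : 'I_#|S| => enum_val i) (fun i : 'I_#|S| => enum_val i) A.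

Definition P0_matrix (R : realType) (m : nat) (A : 'M[R]_m) : Prop :=
  forall S : {set 'I_m}, 0 <= \det (principal_submx A S).

(* Main.v *)
Require Import Defs.
From HB Require Import structures.
From mathcomp Require Import all_boot all_order all_algebra.
From mathcomp Require Import all_classical all_reals all_analysis.
From mathcomp Require Import polyrcf.
From mathcomp Require Import ring lra.
Import Order.TTheory GRing.Theory Num.Theory.
Import numFieldNormedType.Exports.
Local Open Scope ring_scope.
Set Implicit Arguments. Unset Strict Implicit. Unset Printing Implicit Defensive.

Definition cf (R : pzRingType) n (w : 'I_n -> R) (p : pairs n) (t : 'I_n) : R :=
  (if t == (val p).1 then w (val p).2 else 0) - (if t == (val p).2 then w (val p).1 else 0).

Definition Gm (R : comNzRingType) n k (P : 'I_k -> pairs n) (s v : 'I_n -> R) : 'M[R]_k :=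
  \matrix_(a, b) \sum_t cf s (P a) t * cf v (P b) t.

Lemma sum_ifif (R : pzRingType) n (a b : 'I_n) (x y : R) :
  \sum_t ((if t == a then x else 0) * (if t == b then y else 0)) = if a == b then x * y else 0.
Proof.
rewrite (bigD1 a) //= big1 => [|t /negbTE ->]; last by rewrite mul0r.
by rewrite eqxx addr0; case: (a == b); rewrite ?mulr0.
Qed.

Lemma mul_ebasis (R : comNzRingType) n (s v : 'cV[R]_n) k i :
  (s *m v^T *m ebasis R k) i 0 = s i 0 * v k 0.
Proof.
rewrite !mxE (bigD1 k) //= big1 => [|j /negbTE hj]; last by rewrite !mxE hj mulr0.
by rewrite !mxE eqxx mulr1 addr0 big_ord1 !mxE.
Qed.

Lemma compound_entry (R : comNzRingType) n (s v : 'cV[R]_n) a b :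
  compound2 (s *m v^T) a b =
  \sum_t cf (fun i => s i 0) (enum_val a) t * cf (fun i => v i 0) (enum_val b) t.
Proof.
rewrite mxE /wedge_coef !mul_ebasis /ebasis !mxE.
set p := enum_val a; set q := enum_val b.
have E : forall t, cf (fun i => s i 0) p t * cf (fun i => v i 0) q t =
   (if t == (val p).1 then s (val p).2 0 else 0) * (if t == (val q).1 then v (val q).2 0 else 0)
 - (if t == (val p).1 then s (val p).2 0 else 0) * (if t == (val q).2 then v (val q).1 0 else 0)
 - ((if t == (val p).2 then s (val p).1 0 else 0) * (if t == (val q).1 then v (val q).2 0 else 0)
 - (if t == (val p).2 then s (val p).1 0 else 0) * (if t == (val q).2 then v (val q).1 0 else 0)).
  by move=> t; rewrite /cf mulrBl !mulrBr.
rewrite (eq_bigr _ (fun t _ => E t)) !sumrB !sum_ifif.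
rewrite [(val p).1 == (val q).1]eq_sym [(val p).2 == (val q).1]eq_sym.
rewrite [(val p).1 == (val q).2]eq_sym [(val p).2 == (val q).2]eq_sym.
case: ((val q).1 == (val p).1); case: ((val q).2 == (val p).1);
case: ((val q).1 == (val p).2); case: ((val q).2 == (val p).2);
rewrite ?mulr0 ?mul0r ?mulr1 ?subr0 ?sub0r ?addr0 ?add0r; ring.
Qed.

Lemma principal_eq (R : comNzRingType) n (s v : 'cV[R]_n) (S : {set 'I_#|{: pairs n}|}) :
  principal_submx (compound2 (s *m v^T)) S =
  Gm (fun a : 'I_#|S| => enum_val (enum_val a)) (fun i => s i 0) (fun i => v i 0).
Proof. apply/matrixP => a b; rewrite /principal_submx /mxsub [LHS]mxE /Gm [RHS]mxE; exact: compound_entry. Qed.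

Lemma psd_det (R : rcfType) k (G : 'M[R]_k) :
  (forall x : 'rV_k, 0 <= (x *m G *m x^T) 0 0) -> 0 <= \det G.
Proof.
move=> H.
have hroot : forall a, root (char_poly G) a -> 0 <= a.
  move=> a; rewrite -eigenvalue_root_char => /eigenvalueP [x xG xn0].
  have := H x; rewrite xG -scalemxAl mxE.
  have [j xij] := rV0Pn _ xn0.
  have pos : 0 < (x *m x^T) 0 0.
    rewrite mxE (bigD1 j) //=.
    have h1 : 0 < x 0 j * x^T j 0 by rewrite mxE -expr2 exprn_even_gt0 // xij orbT.
    have h2 : 0 <= \sum_(i < k | i != j) x 0 i * x^T i 0.
      by apply: sumr_ge0 => t _; rewrite mxE -expr2 sqr_ge0.
    exact: ltr_wpDr.
  by rewrite pmulr_lge0.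
have [->|d0] := eqVneq (\det G) 0; first by [].
set q := char_poly G.
have q0 : q.[0] = (-1) ^+ k * \det G by rewrite horner_coef0 char_poly_det.
have nr : {in `]-oo, 0], forall y, ~~ root q y}.
  move=> y; rewrite in_itv /= => y0; apply/negP => ry.
  have := hroot _ ry => y0'.
  have ey : y = 0 by apply/eqP; rewrite eq_le y0 y0'.
  move: ry; rewrite ey /root q0 mulf_eq0 signr_eq0 /=.
  by rewrite (negbTE d0).
have := sgp_minftyP nr => /(_ 0); rewrite in_itv /= lexx => /(_ isT).
rewrite q0 /sgp_minfty size_char_poly /= (monicP (char_poly_monic G)) mulr1.
rewrite sgrM sgrX sgrN1 => h.
have : Num.sg (\det G) = 1.
  by rewrite -(signrMK k (Num.sg (\det G))) h -exprMn mulrNN mulr1 expr1n.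
by move/eqP; rewrite sgr_cp0 => /ltW.
Qed.

Lemma key (R : comNzRingType) n (w : 'I_n -> R) (p : pairs n) t :
  cf (fun _ => 1) p t * (w (val p).1 * w (val p).2) = cf w p t * w t.
Proof.
have ne : (val p).1 != (val p).2 by rewrite neq_ltn (valP p).
rewrite /cf; case: eqP => [->|h1]; case: eqP => [h2|h2].
- by rewrite h2 eqxx in ne.
- ring.
- rewrite h2; ring.
- ring.
Qed.

Lemma quad_form (R : comNzRingType) n k (P : 'I_k -> pairs n) (w : 'I_n -> R) (x : 'rV[R]_k) :
  (x *m (\matrix_(a, b) \sum_t cf (fun _ => 1) (P a) t * cf (fun _ => 1) (P b) t * w t)
     *m x^T) 0 0 =
  \sum_t w t * ((\sum_a x 0 a * cf (fun _ => 1) (P a) t) *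
                (\sum_b x 0 b * cf (fun _ => 1) (P b) t)).
Proof.
rewrite mxE.
under eq_bigr => j _ do rewrite !mxE big_distrl /=.
under eq_bigr => j _ do under eq_bigr => i _ do rewrite mxE big_distrr big_distrl /=.
under eq_bigr => j _ do rewrite exchange_big /=.
rewrite exchange_big /=; apply: eq_bigr => t _.
rewrite big_distrlr big_distrr /=; apply: eq_bigr => a _.
rewrite big_distrr /=; apply: eq_bigr => b _.
ring.
Qed.

Lemma Gm_pos (R : realType) n k (P : 'I_k -> pairs n) (s v : 'I_n -> R)
  (h : forall t, 0 < s t * v t) : 0 <= \det (Gm P s v).
Proof.
pose w t := (s t * v t)^-1.
pose G : 'M[R]_k := \matrix_(a, b) \sum_t cf (fun _ => 1) (P a) t * cf (fun _ => 1) (P b) t * w t.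
pose ds : 'rV[R]_k := \row_a (s (val (P a)).1 * s (val (P a)).2).
pose dv : 'rV[R]_k := \row_a (v (val (P a)).1 * v (val (P a)).2).
have E : Gm P s v = diag_mx ds *m G *m diag_mx dv.
  apply/matrixP => a b; rewrite mul_mx_diag mul_diag_mx !mxE.
  rewrite big_distrr big_distrl /=; apply: eq_bigr => t _.
  have k1 := key s (P a) t; have k2 := key v (P b) t.
  have st : s t != 0 by apply: contraTneq (h t) => ->; rewrite mul0r ltxx.
  have vt : v t != 0 by apply: contraTneq (h t) => ->; rewrite mulr0 ltxx.
  symmetry; transitivity ((cf s (P a) t * s t) * (cf v (P b) t * v t) * w t); last first.
    by rewrite /w; field; rewrite st vt.
  rewrite -k1 -k2 /=; ring.
have Gpsd : 0 <= \det G.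
  apply: psd_det => x; rewrite quad_form; apply: sumr_ge0 => t _.
  apply: mulr_ge0; first by rewrite /w invr_ge0 ltW.
  by rewrite -expr2 sqr_ge0.
rewrite E !det_mulmx !det_diag.
have hp : 0 <= (\prod_a ds 0 a) * (\prod_a dv 0 a).
  rewrite -big_split /=; apply: prodr_ge0 => a _; rewrite !mxE.
  have := h (val (P a)).1; have := h (val (P a)).2; nra.
rewrite mulrAC; exact: mulr_ge0.
Qed.

Lemma cf_map (R S : comNzRingType) (f : {rmorphism R -> S}) n (w : 'I_n -> R) p t :
  f (cf w p t) = cf (fun i => f (w i)) p t.
Proof. by rewrite /cf rmorphB; case: (t == _); case: (t == _); rewrite ?rmorph0. Qed.

Lemma Gm_gen (R : realType) n k (P : 'I_k -> pairs n) (s v : 'I_n -> R)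
  (h : forall t, 0 <= s t * v t) : 0 <= \det (Gm P s v).
Proof.
pose sig t : R := if (0 <= s t) && (0 <= v t) then 1 else -1.
have pos : forall e, 0 < e -> forall t, 0 < (s t + e * sig t) * (v t + e * sig t).
  move=> e e0 t; rewrite /sig; have := h t.
  case: (lerP 0 (s t)) => hs; case: (lerP 0 (v t)) => hv /= ht; rewrite ?mulr1 ?mulrN1.
  - nra.
  - have s0 : s t = 0 by apply/eqP; rewrite eq_le hs andbT; nra.
    rewrite s0; nra.
  - have v0 : v t = 0 by apply/eqP; rewrite eq_le hv andbT; nra.
    rewrite v0; nra.
  - nra.
pose sp t : {poly R} := (s t)%:P + (sig t)%:P * 'X.
pose vp t : {poly R} := (v t)%:P + (sig t)%:P * 'X.
pose q := \det (Gm P sp vp).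
have hq : forall e, q.[e] = \det (Gm P (fun t => s t + e * sig t) (fun t => v t + e * sig t)).
  move=> e; rewrite /q -horner_evalE -det_map_mx; congr (\det _).
  apply/matrixP => a b; rewrite !mxE rmorph_sum; apply: eq_bigr => t _.
  rewrite rmorphM /= !cf_map; congr (_ * _); congr (cf _ _ _); apply: funext => i;
  by rewrite /= /sp /vp horner_evalE !hornerE mulrC.
have q0 : q.[0] = \det (Gm P s v).
  rewrite hq; congr (\det (Gm _ _ _)); apply: funext => i; by rewrite mul0r addr0.
rewrite -q0; have [//|qlt] := lerP 0 q.[0].
have qn0 : q.[0] != 0 by rewrite lt_eqF.
have qp : q != 0 by apply: contraNneq qn0 => ->; rewrite horner0.
have [y hy] := neighpr_wit (ltr01 : (0:R) < 1) qp.
have := sgr_neighprN qn0 hy.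
have y0 : 0 < y by move: hy; rewrite /neighpr in_itv /= => /andP[].
have : 0 <= q.[y] by rewrite hq; apply: Gm_pos => t; exact: pos.
rewrite (ltr0_sg qlt) le_eqVlt => /orP[/eqP <-|/gtr0_sg ->]; rewrite ?sgr0 => h1.
- by move: (congr1 (fun x : R => x == 0) h1); rewrite /= eqxx oppr_eq0 oner_eq0.
- have : (0:R) < 1 + 1 by lra.
  by rewrite {2}h1 subrr ltxx.
Qed.


Lemma sign0 (R : realType) (n : nat) (u s : 'cV[R]_n) (hs : Qsign0 u s) (i : 'I_n) :
  s i 0 = 0 \/ Num.sg (s i 0) = Num.sg (u i 0).
Proof.
have [->|s0] := eqVneq (s i 0) 0; [by left|right].
have e0 : 0 < `|s i 0| by rewrite normr_gt0.
have := hs (ball s `|s i 0|) (nbhsx_ballx _ _ e0).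
case=> y [Qy bsy].
rewrite -(Qy i).
move: bsy => [_ /(_ i 0)].
rewrite /ball /=.
move: s0; set a := s i 0; set b := y i 0 => s0.
rewrite ltr_norml => /andP[h1 h2].
have [a0|a0|a0] := ltgtP a 0.
- rewrite ltr0_norm // in h1 h2.
  by rewrite ltr0_sg // ltr0_sg //; lra.
- rewrite gtr0_norm // in h1 h2.
  by rewrite gtr0_sg // gtr0_sg //; lra.
- by rewrite a0 eqxx in s0.
Qed.


Lemma prod_ge0 (R : realType) (n : nat) (u s v : 'cV[R]_n)
  (hs : Qsign0 u s) (hv : Qsign0 u v) (i : 'I_n) : 0 <= s i 0 * v i 0.
Proof.
have [s0|es] := sign0 hs i; first by rewrite s0 mul0r.
have [v0|ev] := sign0 hv i; first by rewrite v0 mulr0.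
have : Num.sg (s i 0 * v i 0) = Num.sg (u i 0) * Num.sg (u i 0) by rewrite sgrM es ev.
have [u0|u0|u0] := ltgtP (u i 0) 0.
- by rewrite (ltr0_sg u0) mulN1r opprK => /eqP; rewrite sgr_cp0 => /ltW.
- by rewrite (gtr0_sg u0) mulr1 => /eqP; rewrite sgr_cp0 => /ltW.
- by rewrite u0 sgr0 mulr0 => /eqP; rewrite sgr_eq0 => /eqP ->.
Qed.

Unset Implicit Arguments.

Theorem lemma4p1 (R : realType) (n : nat) (hn : (2 <= n)%N)
  (u s v : 'cV[R]_n) (hs : Qsign0 u s) (hv : Qsign0 u v) :
  P0_matrix (compound2 (s *m v^T)).
Proof.
move=> S; rewrite principal_eq; apply: Gm_gen => t.
exact: (prod_ge0 hs hv).
Qed.
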